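(* Let $\lambda>0$, $Y\sim\mathrm{Poi}(\lambda)$, and let $g_1:\{0,1,2,\dots\}\to\mathbb R$ be defined by $g_1(0)=0$ and, for integers $w\ge1$, $$g_1(w)=\frac{e^\lambda w!}{\lambda^{w+1}}P(Y\le w)-\frac{e^\lambda (w-1)!}{\lambda^{w}}P(Y\le w-1).$$ Then $g_1$ is non-negative and non-decreasing, and for all integers $w\ge1$, $$g_1(w)\le\frac1\lambda+\frac{(w-1)!\,(w-\lambda)_+}{\lambda^{w+1}}e^\lambda ,$$ where $x_+=\max(x,0)$.
   Context: $\mathrm{Poi}(\lambda)$ is the Poisson distribution with mean $\lambda$. *)

(* Defs.v *)
From Stdlib Require Import Reals Lra Lia Arith Factorial.
Open Scope R_scope.

Definition poi_pmf (lam : R) (k : nat) : R :=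
  exp (- lam) * lam ^ k / INR (fact k).

Definition poi_cdf (lam : R) (w : nat) : R :=
  sum_f_R0 (poi_pmf lam) w.

Definition g1 (lam : R) (w : nat) : R :=
  match w with
  | O => 0
  | S v => exp lam * INR (fact (S v)) / lam ^ (S (S v)) * poi_cdf lam (S v)
           - exp lam * INR (fact v) / lam ^ (S v) * poi_cdf lam v
  end.

Definition pos_part (x : R) : R := Rmax x 0.

(* Main.v *)
Require Import Defs.
From Stdlib Require Import Reals Arith Factorial.
From Stdlib Require Import Lra Lia.
Open Scope R_scope.

Definition H (lam : R) (v : nat) : R :=
  INR (fact v) / lam ^ (S v) * E1 lam v.

Lemma cdf_E1 lam v : poi_cdf lam v = exp (- lam) * E1 lam v.
Proof.
  unfold poi_cdf, E1, poi_pmf. induction v as [|v IH]; cbn [sum_f_R0].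
  - simpl. field.
  - rewrite IH. field. apply INR_fact_neq_0.
Qed.

Lemma g1_H lam (hl : 0 < lam) v : exp lam * INR (fact v) / lam ^ (S v) * poi_cdf lam v = H lam v.
Proof.
  rewrite cdf_E1. unfold H.
  assert (exp lam * exp (- lam) = 1) by (rewrite <- exp_plus; replace (lam + - lam) with 0 by ring; apply exp_0).
  assert (lam ^ S v <> 0) by (apply pow_nonzero; lra).
  replace (exp lam * INR (fact v) / lam ^ S v * (exp (- lam) * E1 lam v)) with
   ((exp lam * exp (- lam)) * (INR (fact v) / lam ^ S v * E1 lam v)) by (field; auto).
  rewrite H0; ring.
Qed.

Lemma g1_S lam (hl : 0 < lam) v : g1 lam (S v) = H lam (S v) - H lam v.
Proof. unfold g1. rewrite !g1_H; auto. Qed.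

Lemma H0 lam (hl : 0 < lam) : H lam 0 = / lam.
Proof. unfold H, E1; simpl. field. lra. Qed.

Lemma Hrec lam (hl : 0 < lam) v : H lam (S v) = INR (S v) / lam * H lam v + / lam.
Proof.
  unfold H. unfold E1 at 1. cbn [sum_f_R0]. fold (E1 lam v).
  rewrite fact_simpl, mult_INR.
  assert (lam ^ S v <> 0) by (apply pow_nonzero; lra).
  assert (INR (fact v) <> 0) by apply INR_fact_neq_0.
  assert (INR (S v) <> 0) by (apply not_0_INR; lia).
  change (lam ^ S (S v)) with (lam * lam ^ S v).
  field. repeat split; auto; lra.
Qed.

Lemma E1_le lam (hl : 0 < lam) v : E1 lam v <= exp lam.
Proof.
  apply growing_ineq. 2: apply E1_cvg.
  intro n. unfold E1. cbn [sum_f_R0].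
  assert (0 <= / INR (fact (S n)) * lam ^ S n).
  { apply Rmult_le_pos. left; apply Rinv_0_lt_compat, INR_fact_lt_0. left; apply pow_lt; auto. }
  lra.
Qed.

Lemma H_pos lam (hl : 0 < lam) v : 0 < H lam v.
Proof.
  induction v. rewrite H0; auto. apply Rinv_0_lt_compat; auto.
  rewrite Hrec; auto.
  assert (0 < INR (S v)) by (apply lt_0_INR; lia).
  assert (0 < / lam) by (apply Rinv_0_lt_compat; auto).
  assert (0 < INR (S v) / lam) by (unfold Rdiv; apply Rmult_lt_0_compat; auto).
  assert (0 < INR (S v) / lam * H lam v) by (apply Rmult_lt_0_compat; auto).
  lra.
Qed.

Lemma Hdiff lam (hl : 0 < lam) w : H lam w - H lam (pred w) = g1 lam w.
Proof. destruct w. simpl; lra. cbn [pred]. rewrite g1_S; auto. Qed.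

Lemma Drec lam (hl : 0 < lam) w :
  g1 lam (S w) = INR (S w) / lam * g1 lam w + H lam (pred w) / lam.
Proof.
  destruct w.
  - cbn [pred]. rewrite g1_S, Hrec, H0; auto. unfold g1. simpl INR. field. lra.
  - rewrite g1_S, g1_S, Hrec, Hrec; auto. simpl pred.
    rewrite (S_INR (S w)). field. lra.
Qed.

Lemma mono lam (hl : 0 < lam) w : 0 <= g1 lam w <= g1 lam (S w).
Proof.
  induction w as [|w [IH1 IH2]].
  - rewrite Drec; auto. cbn [pred]. rewrite H0; auto. change (g1 lam 0) with 0. change (INR 1) with 1.
    assert (0 < / lam) by (apply Rinv_0_lt_compat; auto).
    assert (0 < / lam / lam) by (unfold Rdiv; apply Rmult_lt_0_compat; auto).
    lra.
  - split. lra.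
    pose proof (Drec lam hl (S w)) as D2. pose proof (Drec lam hl w) as D1.
    pose proof (Hdiff lam hl w) as HD. cbn [pred] in D2.
    assert (HI : 0 <= INR w) by apply pos_INR.
    rewrite !S_INR in D1, D2.
    set (a := g1 lam w) in *. set (b := g1 lam (S w)) in *.
    set (h := H lam w) in *. set (h' := H lam (pred w)) in *.
    set (c := g1 lam (S (S w))) in *.
    assert (E : c - b = ((INR w + 2) * b - INR w * a) / lam).
    { rewrite D2, D1. replace h with (h' + a) by lra. rewrite S_INR. field. lra. }
    assert (0 <= ((INR w + 2) * b - INR w * a) / lam).
    { unfold Rdiv. apply Rmult_le_pos. 2: left; apply Rinv_0_lt_compat; auto.
      nra. }
    lra.
Qed.

Lemma bound lam (hl : 0 < lam) v :
  g1 lam (S v) <= / lam + INR (fact v) * pos_part (INR (S v) - lam) / lam ^ (S (S v)) * exp lam.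
Proof.
  rewrite g1_S, Hrec; auto.
  assert (HB : H lam v <= INR (fact v) / lam ^ S v * exp lam).
  { unfold H. apply Rmult_le_compat_l. 2: apply E1_le; auto.
    unfold Rdiv. apply Rmult_le_pos. apply pos_INR. left; apply Rinv_0_lt_compat, pow_lt; auto. }
  pose proof (H_pos lam hl v) as HP.
  assert (E : INR (S v) / lam * H lam v + / lam - H lam v = / lam + (INR (S v) - lam) / lam * H lam v)
    by (field; lra).
  rewrite E.
  assert (Ep : INR (fact v) * pos_part (INR (S v) - lam) / lam ^ S (S v) * exp lam
     = pos_part (INR (S v) - lam) / lam * (INR (fact v) / lam ^ S v * exp lam)).
  { change (lam ^ S (S v)) with (lam * lam ^ S v). field. split. apply pow_nonzero; lra. lra. }
  rewrite Ep.
  assert (Hpp : INR (S v) - lam <= pos_part (INR (S v) - lam)) by (unfold pos_part; apply Rmax_l).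
  assert (Hp0 : 0 <= pos_part (INR (S v) - lam)) by (unfold pos_part; apply Rmax_r).
  assert ((INR (S v) - lam) / lam * H lam v <= pos_part (INR (S v) - lam) / lam * H lam v).
  { apply Rmult_le_compat_r. lra. unfold Rdiv. apply Rmult_le_compat_r. left; apply Rinv_0_lt_compat; auto. auto. }
  assert (pos_part (INR (S v) - lam) / lam * H lam v <= pos_part (INR (S v) - lam) / lam * (INR (fact v) / lam ^ S v * exp lam)).
  { apply Rmult_le_compat_l. unfold Rdiv. apply Rmult_le_pos. auto. left; apply Rinv_0_lt_compat; auto. auto. }
  lra.
Qed.

Theorem lemma4p3 (lam : R) (hlam : 0 < lam) :
  (forall w : nat, 0 <= g1 lam w) /\
  (forall w : nat, g1 lam w <= g1 lam (S w)) /\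
  (forall w : nat, (1 <= w)%nat ->
     g1 lam w <= / lam
       + INR (fact (w - 1)) * pos_part (INR w - lam) / lam ^ (w + 1) * exp lam).
Proof.
  split. intro w; apply (mono lam hlam w).
  split. intro w; apply (mono lam hlam w).
  intros w Hw. destruct w as [|v]. lia.
  replace (S v - 1)%nat with v by lia. replace (S v + 1)%nat with (S (S v)) by lia.
  apply bound; auto.
Qed.
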